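(* Let $n\ge2$, $d\ge1$, $r\ge3$ with $n\ge d$ and $dr\equiv0\pmod n$. For every vertex $(a,x)$ of $Q_n(d,r)$, the distance in $Q_n(d,r)$ between $(0_n,0)$ and $(a,x)$ equals $\|a\|+l(a,x)$.
   Context: $\mathbb{Z}_2^n=\{0,1\}^n$ with coordinatewise addition mod 2; $e_i$ is the $i$-th standard basis vector, subscripts read modulo $n$; $\|a\|$ is the Hamming weight of $a$. The recursive cube of rings $Q_n(d,r)$ is the simple graph on $\mathbb{Z}_2^n\times\mathbb{Z}_r$ in which $(a,x)$ is adjacent to $(a+e_{i+dx},x)$ for $1\le i\le d$ and to $(a,x\pm1)$. For $x\in\mathbb{Z}_r$, $D(x)=\{i+dx\bmod n:1\le i\le d\}\subseteq\{1,\dots,n\}$. Elements of $\mathbb{Z}_r$ are represented in $\{0,\dots,r-1\}$. With $s=\|a\|$, an $(a,x)$-sequence is a tuple $\hat x=(x_0,x_1,\dots,x_s,x_{s+1})$ of elements of $\mathbb{Z}_r$ with $x_0=0$, $x_{s+1}=x$, such that the support $\{i: a_i=1\}$ can be enumerated as $i_1,\dots,i_s$ with $i_t\in D(x_t)$ for every $1\le t\le s$. Its length is $l(\hat x)=\sum_{t=1}^{s+1}\min\{|x_t-x_{t-1}|,\,r-|x_t-x_{t-1}|\}$, and $l(a,x)=\min_{\hat x} l(\hat x)$ over all $(a,x)$-sequences. *)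

(* Defs.v *)
From mathcomp Require Import all_boot.
Set Implicit Arguments. Unset Strict Implicit. Unset Printing Implicit Defensive.

(* Conventions: coordinates 1..n of the paper are the ordinals 'I_n (0-based),
   so paper index k corresponds to ordinal k-1.  Z_r is represented by 'I_r. *)

Definition vertex (n r : nat) := ({ffun 'I_n -> bool} * 'I_r)%type.

Definition hw n (a : {ffun 'I_n -> bool}) : nat := #|[set i | a i]|.

Definition flip n (a : {ffun 'I_n -> bool}) (k : nat) : {ffun 'I_n -> bool} :=
  [ffun i => a i (+) (val i == k %% n)].

(* 0-based D(x): k \in D(x) iff k = (j + d x) mod n for some 0 <= j < d
   (paper: i + dx mod n, 1 <= i <= d, shifted by -1). *)
Definition inD (n d : nat) (x k : nat) : bool :=
  [exists j : 'I_d, k == (j + d * x) %% n].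

Definition qadj (n d r : nat) (u v : vertex n r) : bool :=
  ((u.2 == v.2) && [exists j : 'I_d, v.1 == flip u.1 (j + d * u.2)])
  || ((u.1 == v.1) && ((val v.2 == (u.2 + 1) %% r) || (val u.2 == (v.2 + 1) %% r))).

Definition is_dist (T : eqType) (e : rel T) (u v : T) (k : nat) : Prop :=
  (exists p : seq T, [/\ path e u p, last u p = v & size p = k]) /\
  (forall p : seq T, path e u p -> last u p = v -> k <= size p).

Arguments qadj : clear implicits.

Definition cdist (r x y : nat) : nat :=
  let dd := if x <= y then y - x else x - y in minn dd (r - dd).

(* (a,x)-sequences: xs = (x_0,...,x_{s+1}) *)
Definition is_axseq n d r (a : {ffun 'I_n -> bool}) (x : 'I_r)
    (xs : (hw a).+2.-tuple 'I_r) : bool :=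
  let ys := map val xs in
  [&& nth 0 ys 0 == 0, nth 0 ys (hw a).+1 == val x &
   [exists idx : (hw a).-tuple 'I_n,
      [&& uniq idx, [forall i, (i \in idx) == a i] &
          [forall t : 'I_(hw a), inD n d (nth 0 ys t.+1) (tnth idx t)]]]].

Arguments is_axseq : clear implicits.

Definition seqlen n r (a : {ffun 'I_n -> bool}) (xs : (hw a).+2.-tuple 'I_r) : nat :=
  let ys := map val xs in
  \sum_(t < (hw a).+1) cdist r (nth 0 ys t) (nth 0 ys t.+1).

Arguments seqlen : clear implicits.

(* l(a,x) = minimum over all (a,x)-sequences (the default value is irrelevant
   as (a,x)-sequences always exist under the hypotheses of the theorem). *)
Definition lmin n d r (a : {ffun 'I_n -> bool}) (x : 'I_r) : nat :=
  \big[minn/((hw a).+1 * r)]_(xs : (hw a).+2.-tuple 'I_r | is_axseq n d r a x xs)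
     seqlen n r a xs.

Arguments lmin : clear implicits.

(* Main.v *)
Require Import Defs.
From mathcomp Require Import all_boot zify.

Lemma cdist_tri r a b c : a < r -> b < r -> c < r ->
  cdist r a c <= cdist r a b + cdist r b c.
Proof.
move=> ha hb hc; rewrite /cdist.
case: (leqP a c) => ?; case: (leqP a b) => ?; case: (leqP b c) => ? /=; lia.
Qed.

Lemma cdist0 r a : cdist r a a = 0.
Proof. rewrite /cdist; case: (leqP a a) => /= ?; lia. Qed.

Lemma cdist_sym r a b : cdist r a b = cdist r b a.
Proof. rewrite /cdist; case: (leqP a b); case: (leqP b a) => /= *; lia. Qed.

Lemma cdist_le r a b : cdist r a b <= r.
Proof. rewrite /cdist; case: (leqP a b) => /= *; lia. Qed.

Lemma cdist_step r a b : a < r -> b = (a + 1) %% r -> cdist r a b <= 1.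
Proof.
move=> ha ->; case: (ltnP (a + 1) r) => h.
  rewrite modn_small //; rewrite /cdist; case: (leqP a (a+1)) => /= ?; lia.
have e : a + 1 = r by lia.
rewrite e modnn /cdist; case: (leqP a 0) => /= ?; lia.
Qed.

Fixpoint cost (r : nat) (y0 : nat) (S : seq (nat * nat)) (x : nat) : nat :=
  match S with
  | [::] => cdist r y0 x
  | q :: S' => cdist r y0 q.2 + cost r q.2 S' x
  end.

Lemma cost_tri r y0 z S x : y0 < r -> z < r -> x < r -> all (fun q => q.2 < r) S ->
  cost r y0 S x <= cdist r y0 z + cost r z S x.
Proof.
move=> h0 hz hx; case: S => [|q S] /=; first by move=> _; apply: cdist_tri.
case/andP=> hq _; rewrite addnA leq_add2r; exact: cdist_tri.
Qed.

Lemma cost_filter r P S y0 x : y0 < r -> x < r -> all (fun q => q.2 < r) S ->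
  cost r y0 (filter P S) x <= cost r y0 S x.
Proof.
elim: S y0 => [|q S IH] y0 h0 hx //= /andP [hq hS].
case: (P q) => /=; first by rewrite leq_add2l; apply: IH.
apply: leq_trans (cost_tri r y0 q.2 (filter P S) x h0 hq hx _) _.
  by apply/allP=> z; rewrite mem_filter => /andP [_ zi]; exact: (allP hS).
rewrite leq_add2l; exact: IH.
Qed.

Lemma walk_up n d r (b : {ffun 'I_n -> bool}) (y : 'I_r) m :
  exists p, [/\ path (qadj n d r) (b, y) p, (last (b, y) p).1 = b,
     val (last (b, y) p).2 = (y + m) %% r & size p = m].
Proof.
have r0 : 0 < r by apply: leq_ltn_trans (ltn_ord y).
elim: m => [|m [p [hp h1 h2 hs]]].
  by exists [::]; split => //=; rewrite addn0 modn_small.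
set w := last (b, y) p.
exists (rcons p (b, Ordinal (ltn_pmod (w.2 + 1) r0))); split.
- rewrite rcons_path hp /= /qadj /= -/w h1 eqxx /=; apply/orP; right; by rewrite eqxx.
- by rewrite last_rcons.
- rewrite last_rcons /= -/w h2 modnDml; congr (_ %% _); lia.
- by rewrite size_rcons hs.
Qed.

Lemma walk_down n d r (b : {ffun 'I_n -> bool}) (y : 'I_r) m : m <= r ->
  exists p, [/\ path (qadj n d r) (b, y) p, (last (b, y) p).1 = b,
     val (last (b, y) p).2 = (y + (r - m)) %% r & size p = m].
Proof.
have r0 : 0 < r by apply: leq_ltn_trans (ltn_ord y).
elim: m => [|m IH] hm.
  by exists [::]; split => //=; rewrite subn0 modnDr modn_small.
have [p [hp h1 h2 hs]] := IH (ltnW hm).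
set w := last (b, y) p.
exists (rcons p (b, Ordinal (ltn_pmod (w.2 + (r - 1)) r0))); split.
- rewrite rcons_path hp /= /qadj /= -/w h1 eqxx /=; apply/orP; right; apply/orP; right.
  apply/eqP; rewrite modnDml -addnA (_ : r - 1 + 1 = r); last by lia.
  by rewrite modnDr modn_small.
- by rewrite last_rcons.
- rewrite last_rcons /= -/w h2 modnDml.
  rewrite (_ : y + (r - m) + (r - 1) = y + (r - m.+1) + r); last by lia.
  by rewrite modnDr.
- by rewrite size_rcons hs.
Qed.

Lemma ring_walk n d r (b : {ffun 'I_n -> bool}) (y z : 'I_r) :
  exists p, [/\ path (qadj n d r) (b, y) p, last (b, y) p = (b, z) & size p = cdist r y z].
Proof.
have hz := ltn_ord z; have hy := ltn_ord y.
suff [m [hm [p [hp h1 h2 hs]]]] : exists m, m = cdist r y z /\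
  exists p, [/\ path (qadj n d r) (b, y) p, (last (b, y) p).1 = b,
     val (last (b, y) p).2 = z & size p = m].
  exists p; split => //; last by rewrite hs.
  by move: h1 h2; case: (last _ _) => u v /= -> h; congr pair; apply: val_inj.
pose dd := if y <= z then z - y else y - z.
case: (leqP y z) => hyz.
  case: (leqP (z - y) (r - (z - y))) => h.
  - exists (z - y); split; first by rewrite /cdist hyz /=; lia.
    have [p [hp h1 h2 hs]] := walk_up n d r b y (z - y); exists p; split => //.
    by rewrite h2 (_ : y + (z - y) = z) ?modn_small //; lia.
  - exists (r - (z - y)); split; first by rewrite /cdist hyz /=; lia.
    have [p [hp h1 h2 hs]] := walk_down n d r b y (r-(z-y)) (leq_subr (z - y) r); exists p; split => //.
    rewrite h2 (_ : y + (r - (r - (z - y))) = z); last by lia.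
    by rewrite modn_small.
case: (leqP (y - z) (r - (y - z))) => h.
- exists (y - z); split; first by rewrite /cdist leqNgt hyz /=; lia.
  have hle : y - z <= r by lia.
  have [p [hp h1 h2 hs]] := walk_down n d r b y (y-z) hle.
  exists p; split => //.
  rewrite h2 (_ : y + (r - (y - z)) = z + r); last by lia.
  by rewrite modnDr modn_small.
- exists (r - (y - z)); split; first by rewrite /cdist leqNgt hyz /=; lia.
  have [p [hp h1 h2 hs]] := walk_up n d r b y (r - (y - z)); exists p; split => //.
  rewrite h2 (_ : y + (r - (y - z)) = z + r); last by lia.
  by rewrite modnDr modn_small.
Qed.

Lemma build_path n d r (x : 'I_r) : forall S (b : {ffun 'I_n -> bool}) (y : 'I_r),
  uniq (map fst S) -> all (fun q => (q.2 < r) && inD n d q.2 q.1) S ->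
  exists p, [/\ path (qadj n d r) (b, y) p,
    last (b, y) p = ([ffun i => b i (+) (val i \in map fst S)], x)
    & size p = size S + cost r y S x].
Proof.
elim=> [|[k z] S IH] b y /=.
  move=> _ _; have [p [hp hl hs]] := ring_walk n d r b y x.
  exists p; split => //; rewrite hl; congr pair.
  by apply/ffunP => i; rewrite ffunE addbF.
case/andP=> hk hu /andP [/andP [hz hD] hall].
pose z' : 'I_r := Ordinal hz.
have [p1 [hp1 hl1 hs1]] := ring_walk n d r b y z'.
case/existsP: hD => j /eqP hj.
pose b1 := flip b (j + d * z').
have [p2 [hp2 hl2 hs2]] := IH b1 z' hu hall.
exists (p1 ++ (b1, z') :: p2); split.
- rewrite cat_path hp1 hl1 /= hp2 andbT /qadj /= eqxx /=.
  by apply/orP; left; apply/existsP; exists j.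
- rewrite last_cat hl1 /= hl2; congr pair; apply/ffunP => i.
  rewrite !ffunE /= in_cons -hj.
  case: (eqVneq (val i) k) => [e|ne] /=.
    by rewrite -e in hk; rewrite (negbTE hk) addbF.
  by rewrite addbF.
- by rewrite size_cat /= hs1 hs2 /=; lia.
Qed.

Lemma lower n d r (a : {ffun 'I_n -> bool}) (x : 'I_r) : forall p (b : {ffun 'I_n -> bool}) (y : 'I_r),
  path (qadj n d r) (b, y) p -> last (b, y) p = (a, x) ->
  exists S, [/\ uniq (map fst S), forall i : 'I_n, (val i \in map fst S) = a i (+) b i,
     all (fun q => (q.2 < r) && inD n d q.2 q.1) S & size S + cost r y S x <= size p].
Proof.
have hx := ltn_ord x.
elim=> [|[b' y'] p IH] b y /=.
  move=> _ [-> ->]; exists [::]; split => //.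
  - by move=> i; rewrite addbb.
  - by rewrite /= cdist0.
case/andP=> hst hp hl.
have [S' [hu hm hall hs]] := IH b' y' hp hl.
have hall2 : all (fun q => q.2 < r) S'.
  by apply/allP=> q /(allP hall) /andP [].
have hy := ltn_ord y; have hy' := ltn_ord y'.
case/orP: hst => /= [/andP [/eqP eyy /existsP [j /eqP eb']] | /andP [/eqP eb hyy]].
- subst y'.
  set k := (j + d * y) %% n.
  have hm' : forall i : 'I_n, (val i \in map fst S') = a i (+) b i (+) (val i == k).
    by move=> i; rewrite hm eb' /flip ffunE addbA.
  case hk: (k \in map fst S').
  + exists (filter (fun q => q.1 != k) S').
    have em : map fst (filter (fun q => q.1 != k) S') = [seq u <- map fst S' | u != k].
      by rewrite filter_map.
    split.
    * by rewrite em filter_uniq.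
    * move=> i; rewrite em mem_filter hm'.
      case: (eqVneq (val i) k) => [e|ne] /=; last by rewrite addbF.
      by move: (hm' i); rewrite e hk eqxx; case: (a i (+) b i).
    * by apply/allP=> q; rewrite mem_filter => /andP [_ /(allP hall)].
    * apply: leq_trans (leqnSn _); apply: leq_trans hs; apply: leq_add.
        by rewrite size_filter count_size.
      exact: cost_filter.
  + exists ((k, val y) :: S'); split.
    * by rewrite /= hk hu.
    * move=> i; rewrite /= in_cons hm'.
      case: (eqVneq (val i) k) => [e|ne] /=; last by rewrite addbF.
      by move: (hm' i); rewrite e hk eqxx; case: (a i (+) b i).
    * rewrite /= hall andbT hy /=; apply/existsP; exists j; by rewrite /k.
    * by rewrite /= cdist0 add0n addSn ltnS.
- subst b'; exists S'; split => //.
  apply: leq_trans (_ : size S' + (cdist r y y' + cost r y' S' x) <= _).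
    by rewrite leq_add2l; apply: cost_tri.
  have : cdist r y y' <= 1.
    case/orP: hyy => /eqP e; first by apply: cdist_step.
    by rewrite cdist_sym; apply: cdist_step.
  move=> h1; rewrite addnCA -addn1 addnC leq_add //.
Qed.
Fixpoint pcost (r : nat) (y0 : nat) (l : seq nat) : nat :=
  match l with
  | [::] => 0
  | z :: l' => cdist r y0 z + pcost r z l'
  end.

Lemma cost_pcost r y0 S x : cost r y0 S x = pcost r y0 (rcons (map snd S) x).
Proof. by elim: S y0 => [|q S IH] y0 /=; rewrite ?addn0 ?IH. Qed.

Lemma sum_pcost r (l : seq nat) : forall y0 m, size l = m ->
  \sum_(t < m) cdist r (nth 0 (y0 :: l) t) (nth 0 (y0 :: l) t.+1) = pcost r y0 l.
Proof.
elim: l => [|z l IH] y0 [|m] //=; first by rewrite big_ord0.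
by move=> [hm]; rewrite big_ord_recl /= IH.
Qed.

Lemma map_val_pmap_insub n (L : seq nat) : all (fun k => k < n) L ->
  map val (pmap (insub : nat -> option 'I_n) L) = L.
Proof.
elim: L => //= k L IH /andP [hk hL]; by rewrite insubT /= IH.
Qed.

Lemma inD_lt n d y k : 0 < n -> inD n d y k -> k < n.
Proof. by move=> n0 /existsP [j /eqP ->]; rewrite ltn_pmod. Qed.

Lemma S_to_xs n d r (a : {ffun 'I_n -> bool}) (x : 'I_r) S : 0 < n ->
  uniq (map fst S) -> (forall i : 'I_n, (val i \in map fst S) = a i) ->
  all (fun q => (q.2 < r) && inD n d q.2 q.1) S ->
  size S = hw a /\ exists xs, is_axseq n d r a x xs /\ seqlen n r a xs = cost r 0 S x.
Proof.
move=> n0 hu hm hall.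
have r0 : 0 < r by apply: leq_ltn_trans (ltn_ord x).
have hlt : all (fun k => k < n) (map fst S).
  rewrite all_map; apply/allP => q /(allP hall) /andP [_ h]; exact: inD_lt h.
pose idxL := pmap (insub : nat -> option 'I_n) (map fst S).
have hidv : map val idxL = map fst S by apply: map_val_pmap_insub.
have hidu : uniq idxL by apply: pmap_sub_uniq.
have hidm : forall i, (i \in idxL) = a i by move=> i; rewrite mem_pmap_sub hm.
have hsz : size S = hw a.
  rewrite -(size_map fst) -hidv size_map /hw -(elimT card_uniqP hidu).
  apply: eq_card => i; by rewrite inE hidm.
split => //.
have hsi : size idxL == hw a by rewrite -hsz -(size_map val) hidv size_map.
pose idx := Tuple hsi.
pose ysL := 0 :: rcons (map snd S) (val x).
have hylt : all (fun k => k < r) ysL.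
  rewrite /= r0 all_rcons ltn_ord /= all_map; apply/allP => q /(allP hall) /andP [h _]; exact: h.
pose xsL := pmap (insub : nat -> option 'I_r) ysL.
have hxv : map val xsL = ysL by apply: map_val_pmap_insub.
have hsx : size xsL == (hw a).+2.
  by rewrite -(size_map val) hxv /= size_rcons size_map hsz.
exists (Tuple hsx); split; last first.
  rewrite /seqlen /= hxv /ysL sum_pcost ?cost_pcost //.
  by rewrite size_rcons size_map hsz.
rewrite /is_axseq /= hxv /ysL /=. 
apply/andP; split.
  by rewrite nth_rcons size_map hsz ltnn eqxx.
apply/existsP; exists idx; apply/and3P; split => //.
  by apply/forallP => i; rewrite hidm.
apply/forallP => t.
have ht : t < size S by rewrite hsz.
rewrite nth_rcons size_map ht.
rewrite (tnth_nth (tnth idx t)) /=.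
have := (all_nthP (0,0) hall t ht) => /andP [_].
rewrite (nth_map (0,0)) //.
suff -> : val (nth (tnth idx t) idxL t) = (nth (0, 0) S t).1 by [].
rewrite -(nth_map _ 0); last by rewrite -(size_map val) hidv size_map.
by rewrite hidv (nth_map (0,0)).
Qed.

Lemma xs_to_S n d r (a : {ffun 'I_n -> bool}) (x : 'I_r) xs : is_axseq n d r a x xs ->
  exists S, [/\ uniq (map fst S), forall i : 'I_n, (val i \in map fst S) = a i,
   all (fun q => (q.2 < r) && inD n d q.2 q.1) S, size S = hw a & cost r 0 S x = seqlen n r a xs].
Proof.
rewrite /is_axseq /seqlen /= => /and3P [h0 hx /existsP [idx /and3P [hu /forallP hm /forallP hD]]].
have hys : size (map val xs) = (hw a).+2 by rewrite size_map size_tuple.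
have eys : map val xs = 0 :: behead (map val xs).
  by rewrite -(eqP h0); case: (map val xs) hys.
move: hys hx hD; rewrite eys; set l := behead _ => /= [[hl]] hx hD.
pose S := zip (map val idx) (take (hw a) l).
have hsz1 : size (map val idx) = hw a by rewrite size_map size_tuple.
have hsz2 : size (take (hw a) l) = hw a by rewrite size_take hl ltnSn.
have h1 : map fst S = map val idx by apply: unzip1_zip; rewrite hsz1 hsz2.
have h2 : map snd S = take (hw a) l by apply: unzip2_zip; rewrite hsz1 hsz2.
have hsz : size S = hw a by rewrite size_zip hsz1 hsz2 minnn.
exists S; split => //.
- by rewrite h1 (map_inj_uniq val_inj).
- by move=> i; rewrite h1 (mem_map val_inj); apply/eqP.
- apply/(all_nthP (0,0)) => t; rewrite hsz => ht.
  rewrite nth_zip ?hsz1 ?hsz2 //= nth_take //.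
  have := hD (Ordinal ht) => /=; rewrite (tnth_nth (tnth idx (Ordinal ht))) /=.
  rewrite (nth_map (tnth idx (Ordinal ht))) ?size_tuple // => ->; rewrite andbT.
  have : nth 0 l t \in l by rewrite mem_nth // hl ltnS ltnW.
  move=> /mem_behead /mapP [z _ ->]; exact: ltn_ord.
- have ex : val x = nth 0 l (hw a) by apply/esym/eqP.
  rewrite cost_pcost h2 ex -take_nth ?hl //.
  rewrite take_oversize ?hl // -(sum_pcost r l 0 (hw a).+1 hl).
  by apply: eq_bigr.
Qed.

Lemma bigmin_le (T : finType) (P : pred T) (F : T -> nat) D x : P x ->
  \big[minn/D]_(y | P y) F y <= F x.
Proof.
move=> Px.
have : forall s, x \in s -> \big[minn/D]_(y <- s | P y) F y <= F x.
  elim=> // y s IH; rewrite in_cons big_cons; case/orP => [/eqP <-|hs].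
    by rewrite Px geq_minl.
  by case: (P y); rewrite ?geq_min IH ?orbT.
by apply; rewrite mem_index_enum.
Qed.

Lemma bigmin_attained (T : finType) (P : pred T) (F : T -> nat) D :
  (forall y, P y -> F y <= D) -> (exists x, P x) ->
  exists x, P x /\ \big[minn/D]_(y | P y) F y = F x.
Proof.
move=> hD [x0 Px0].
have : forall s, has P s -> exists x, P x /\ \big[minn/D]_(y <- s | P y) F y = F x.
  elim=> // y s IH /= hyp; rewrite big_cons.
  case hs: (has P s).
    have [x [Px ->]] := IH hs.
    case Py: (P y); last by exists x.
    case: (leqP (F y) (F x)) => h.
      by exists y; split => //; apply/minn_idPl.
    by exists x; split => //; apply/minn_idPr; apply: ltnW.
  rewrite big_hasC ?hs //.
  have Py : P y by move: hyp; rewrite hs orbF.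
  by exists y; rewrite Py; split => //; apply/minn_idPl; apply: hD.
by apply; apply/hasP; exists x0; rewrite ?mem_index_enum.
Qed.

Lemma seqlen_le n r a xs : seqlen n r a xs <= (hw a).+1 * r.
Proof.
rewrite /seqlen; apply: (@leq_trans (\sum_(t < (hw a).+1) r)).
  by apply: leq_sum => t _; apply: cdist_le.
by rewrite sum_nat_const card_ord.
Qed.

Theorem mainTheorem6 (n d r : nat) :
  2 <= n -> 1 <= d -> 3 <= r -> d <= n -> d * r %% n = 0 ->
  forall (x0 : 'I_r), val x0 = 0 ->
  forall (a : {ffun 'I_n -> bool}) (x : 'I_r),
    is_dist (qadj n d r) ([ffun => false], x0) (a, x) (hw a + lmin n d r a x).
Proof.
move=> hn hd hr hdn hdr x0 hx0 a x.
have n0 : 0 < n by lia.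
have hx0' : nat_of_ord x0 = 0 := hx0.
have hndr : n <= d * r.
  apply: dvdn_leq; first by rewrite muln_gt0; lia.
  by apply/eqP.
pose S0 := [seq (val i, val i %/ d) | i <- enum 'I_n & a i].
have hS0 : [/\ uniq (map fst S0), forall i : 'I_n, (val i \in map fst S0) = a i &
    all (fun q => (q.2 < r) && inD n d q.2 q.1) S0].
  have e1 : map fst S0 = map val [seq i <- enum 'I_n | a i] by rewrite /S0 -map_comp.
  split.
  - by rewrite e1 (map_inj_uniq val_inj) filter_uniq ?enum_uniq.
  - by move=> i; rewrite e1 (mem_map val_inj) mem_filter mem_enum andbT.
  - apply/allP => q /mapP [i _ ->] /=; apply/andP; split.
      rewrite ltn_divLR; last by lia.
      by rewrite mulnC; apply: leq_trans hndr.
    apply/existsP; exists (Ordinal (ltn_pmod i hd)).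
    by rewrite /= addnC mulnC -divn_eq modn_small.
case: hS0 => hu0 hm0 ha0.
have [_ [xs0 [hxs0 _]]] := S_to_xs n d r a x S0 n0 hu0 hm0 ha0.
split.
- have [xs [hxs hmin]] := bigmin_attained _ (fun xs => is_axseq n d r a x xs)
      (seqlen n r a) ((hw a).+1 * r) (fun y _ => seqlen_le n r a y) (ex_intro _ xs0 hxs0).
  have [S [hu hm hall hsz hc]] := xs_to_S n d r a x xs hxs.
  have [p [hp hl hs]] := build_path n d r x S [ffun => false] x0 hu hall.
  exists p; split => //.
    rewrite hl; congr pair; apply/ffunP => i; by rewrite !ffunE hm.
  by rewrite hs hsz hx0' hc /lmin hmin.
- move=> p hp hl.
  have [S [hu hm hall hs]] := lower n d r a x p _ _ hp hl.
  have hm' : forall i : 'I_n, (val i \in map fst S) = a i.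
    by move=> i; rewrite hm ffunE addbF.
  have [hsz [xs [hxs hc]]] := S_to_xs n d r a x S n0 hu hm' hall.
  apply: leq_trans hs; rewrite hsz leq_add2l hx0' -hc.
  exact: bigmin_le.
Qed.
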